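(* For every $n\ge 0$, if $B_n$ is the Boolean lattice of subsets of an $n$-element set, then $\mathcal{M}(B_n,t)=(t+1)^n(t-1)^{2n}$.
   Context: $B_n$ is ranked by cardinality, $\mathrm{rk}(B_n)=n$, and $\rho(x,y,z)=3n-\mathrm{rk}(x)-\mathrm{rk}(y)-\mathrm{rk}(z)$. Let $\delta_3(x,y,z)=1$ if $x=y=z$ and $0$ otherwise, and $J$ the unique integer-valued function on triples $x\le y\le z$ with $\sum_{x\le a\le y\le b\le z}J(a,y,b)=\delta_3(x,y,z)$ for all $x\le y\le z$. Then $\mathcal{M}(B_n,t)=\sum_{x\le y\le z}J(x,y,z)\,t^{\rho(x,y,z)}$. *)

(* Defs.v *)
From mathcomp Require Import all_boot all_order all_algebra.
Set Implicit Arguments. Unset Strict Implicit. Unset Printing Implicit Defensive.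
Import GRing.Theory Num.Theory.
Local Open Scope ring_scope.

(* B_n := {set 'I_n}, ordered by inclusion, ranked by cardinality. *)
Definition Bn (n : nat) := {set 'I_n}.

(* rho(x,y,z) = 3n - rk x - rk y - rk z  (always >= 0 in B_n) *)
Definition rho (n : nat) (x y z : {set 'I_n}) : nat :=
  (3 * n - #|x| - #|y| - #|z|)%N.

Definition delta3 (n : nat) (x y z : {set 'I_n}) : int :=
  ((x == y) && (y == z))%:R.

Definition J_spec (n : nat) (J : {set 'I_n} -> {set 'I_n} -> {set 'I_n} -> int) : Prop :=
  forall x y z : {set 'I_n}, x \subset y -> y \subset z ->
    \sum_(a : {set 'I_n} | (x \subset a) && (a \subset y))
      \sum_(b : {set 'I_n} | (y \subset b) && (b \subset z)) J a y b
    = delta3 x y z.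

Definition Mpoly (n : nat) (J : {set 'I_n} -> {set 'I_n} -> {set 'I_n} -> int)
  : {poly int} :=
  \sum_(x : {set 'I_n}) \sum_(y : {set 'I_n}) \sum_(z : {set 'I_n} |
      (x \subset y) && (y \subset z))
    (J x y z)%:P * 'X^(rho x y z).

(* Main.v *)
Require Import Defs.
From mathcomp Require Import all_boot all_order all_algebra.
From mathcomp Require Import ring zify.
Set Implicit Arguments. Unset Strict Implicit. Unset Printing Implicit Defensive.
Import GRing.Theory.
Local Open Scope ring_scope.
Section Gen.
Variable T : finType.
Variable R : comNzRingType.

Lemma setUDK (a x : {set T}) : a \subset x -> a :|: (x :\: a) = x.
Proof. by move=> ax; rewrite setDE setUIr setUCr setIT; apply/setUidPr. Qed.

Lemma interval_reindex (a c : {set T}) (F : {set T} -> R) : a \subset c ->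
  \sum_(x : {set T} | (a \subset x) && (x \subset c)) F x
  = \sum_(s : {set T} | s \subset c :\: a) F (a :|: s).
Proof.
move=> ac.
rewrite (reindex_onto (fun s => a :|: s) (fun x => x :\: a)) /=; last first.
  by move=> x /andP[ax _]; rewrite setUDK.
apply: eq_bigl => s.
rewrite subsetUl /= setDUl setDv set0U subUset ac /= subsetD.
congr (_ && _).
by apply/idP/idP => [/eqP/setDidPl|/setDidPl ->].
Qed.

Lemma Gsum (D : {set T}) (u v : R) :
  \sum_(s : {set T} | s \subset D) u ^+ (#|D| - #|s|) * v ^+ #|s| = (u + v) ^+ #|D|.
Proof.
rewrite exprDn (partition_big (fun s : {set T} => inord #|s| : 'I_(#|D|.+1)) xpredT) //=.
apply: eq_bigr => k _.
rewrite (eq_bigr (fun _ => u ^+ (#|D| - k) * v ^+ k)); last first.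
  by move=> s /andP[sD /eqP <-]; rewrite inordK // ltnS subset_leq_card.
rewrite (eq_bigl (mem [set s : {set T} | s \subset D & #|s| == k])); last first.
  move=> s; rewrite !inE; case sD: (s \subset D) => //=.
  by rewrite -(inj_eq val_inj) /= inordK // ltnS subset_leq_card.
by rewrite sumr_const cards_draws.
Qed.

Lemma GI (a c : {set T}) (u v : R) : a \subset c ->
  \sum_(x : {set T} | (a \subset x) && (x \subset c))
     u ^+ (#|c| - #|x|) * v ^+ (#|x| - #|a|) = (u + v) ^+ (#|c| - #|a|).
Proof.
move=> ac; rewrite interval_reindex // -cardsDS // -Gsum.
apply: eq_bigr => s; rewrite subsetD => /andP[sc dsa].
have hU : #|a :|: s| = (#|a| + #|s|)%N.
  by rewrite cardsU disjoint_setI0 ?cards0 ?subn0 // disjoint_sym.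
have hc : #|c| = (#|a| + #|c :\: a|)%N.
  rewrite cardsDS //; have := subset_leq_card ac; lia.
by rewrite hU hc; congr (u ^+ _ * v ^+ _); lia.
Qed.

Lemma AltR (b' b : {set T}) : b' \subset b ->
  \sum_(z : {set T} | (b' \subset z) && (z \subset b)) (-1) ^+ (#|b| - #|z|) = (b' == b)%:R :> R.
Proof.
move=> bb.
rewrite (eq_bigr (fun z : {set T} => (-1 : R) ^+ (#|b| - #|z|) * 1 ^+ (#|z| - #|b'|))); last first.
  by move=> z _; rewrite expr1n mulr1.
rewrite GI // addNr expr0n eqEcard bb /= subn_eq0.
done.
Qed.

Lemma AltL (a a' : {set T}) : a \subset a' ->
  \sum_(x : {set T} | (a \subset x) && (x \subset a')) (-1) ^+ (#|x| - #|a|) = (a == a')%:R :> R.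
Proof.
move=> aa.
rewrite (eq_bigr (fun x : {set T} => (1 : R) ^+ (#|a'| - #|x|) * (-1) ^+ (#|x| - #|a|))); last first.
  by move=> z _; rewrite expr1n mul1r.
by rewrite GI // addrN expr0n eqEcard aa /= subn_eq0.
Qed.


Lemma invR (f : {set T} -> R) (y b : {set T}) : y \subset b ->
  \sum_(z : {set T} | (y \subset z) && (z \subset b))
     (-1) ^+ (#|b| - #|z|) * \sum_(b' : {set T} | (y \subset b') && (b' \subset z)) f b'
  = f b.
Proof.
move=> yb.
under eq_bigr do rewrite big_distrr /=.
rewrite (exchange_big_dep (fun b' : {set T} => (y \subset b') && (b' \subset b))) /=; last first.
  by move=> z b' /andP[yz zb] /andP[yb' b'z]; rewrite yb' (subset_trans b'z zb).
rewrite (eq_bigr (fun b' => (b' == b)%:R * f b')); last first.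
  move=> b' /andP[yb' b'b].
  rewrite (eq_bigl (fun z : {set T} => (b' \subset z) && (z \subset b))); last first.
    move=> z; apply/idP/idP => [/andP[/andP[_ zb] /andP[_ b'z]]|/andP[b'z zb]].
      by rewrite b'z zb.
    by rewrite (subset_trans yb' b'z) zb yb' b'z.
  by rewrite -big_distrl /= AltR.
rewrite (bigD1 b) /= ?yb ?subxx // eqxx mul1r big1 ?addr0 //.
by move=> b' /andP[_ /negbTE ->]; rewrite mul0r.
Qed.

Lemma invL (f : {set T} -> R) (a y : {set T}) : a \subset y ->
  \sum_(x : {set T} | (a \subset x) && (x \subset y))
     (-1) ^+ (#|x| - #|a|) * \sum_(a' : {set T} | (x \subset a') && (a' \subset y)) f a'
  = f a.
Proof.
move=> ay.
under eq_bigr do rewrite big_distrr /=.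
rewrite (exchange_big_dep (fun a' : {set T} => (a \subset a') && (a' \subset y))) /=; last first.
  by move=> x a' /andP[ax xy] /andP[xa' a'y]; rewrite a'y (subset_trans ax xa').
rewrite (eq_bigr (fun a' => (a == a')%:R * f a')); last first.
  move=> a' /andP[aa' a'y].
  rewrite (eq_bigl (fun x : {set T} => (a \subset x) && (x \subset a'))); last first.
    move=> x; apply/idP/idP => [/andP[/andP[ax _] /andP[xa' _]]|/andP[ax xa']].
      by rewrite ax xa'.
    by rewrite ax xa' a'y (subset_trans xa' a'y).
  by rewrite -big_distrl /= AltL.
rewrite (bigD1 a) /= ?ay ?subxx // eqxx mul1r big1 ?addr0 //.
by move=> a' /andP[_]; rewrite eq_sym => /negbTE ->; rewrite mul0r.
Qed.

Lemma sum_filter2 (F : {set T} -> {set T} -> R) (P : pred {set T}) (Q : {set T} -> pred {set T}) :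
  \sum_(i | P i) \sum_(j | Q i j) F i j = \sum_i \sum_(j | P i && Q i j) F i j.
Proof.
rewrite big_mkcond; apply: eq_bigr => i _; case: (P i) => //=.
by rewrite big_pred0.
Qed.

End Gen.

Definition J0 n (a y b : {set 'I_n}) : int := (-1) ^+ (#|y| - #|a|) * (-1) ^+ (#|b| - #|y|).

Lemma J0_spec n : J_spec (@J0 n).
Proof.
move=> x y z xy yz; rewrite /J0.
under eq_bigr do rewrite -big_distrr /=.
by rewrite -big_distrl /= AltR // AltL // /delta3 -natrM mulnb.
Qed.

Lemma J_uniq n (J : {set 'I_n} -> {set 'I_n} -> {set 'I_n} -> int) : J_spec J ->
  forall a y b : {set 'I_n}, a \subset y -> y \subset b -> J a y b = J0 a y b.
Proof.
move=> HJ a y b ay yb.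
have claim : forall x : {set 'I_n}, x \subset y ->
   \sum_(a' : {set 'I_n} | (x \subset a') && (a' \subset y)) J a' y b
   = (-1) ^+ (#|b| - #|y|) * (x == y)%:R.
  move=> x xy.
  transitivity (\sum_(a' : {set 'I_n} | (x \subset a') && (a' \subset y))
     \sum_(z : {set 'I_n} | (y \subset z) && (z \subset b))
       (-1) ^+ (#|b| - #|z|) * \sum_(b' : {set 'I_n} | (y \subset b') && (b' \subset z)) J a' y b').
    by apply: eq_bigr => a' _; symmetry; exact: (invR (fun b' => J a' y b') yb).
  rewrite exchange_big /=.
  transitivity (\sum_(z : {set 'I_n} | (y \subset z) && (z \subset b))
       (-1) ^+ (#|b| - #|z|) * delta3 x y z).
    by apply: eq_bigr => z /andP[yz zb]; rewrite -big_distrr /= HJ.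
  rewrite (bigD1 y) /= ?subxx ?yb // big1 ?addr0; first by rewrite /delta3 eqxx andbT.
  by move=> z /andP[_ zy]; rewrite /delta3 (eq_sym y z) (negbTE zy) andbF mulr0.
have := invL (fun a' => J a' y b) ay; rewrite /= => <-.
rewrite (eq_bigr (fun x : {set 'I_n} => (-1) ^+ (#|x| - #|a|) * ((-1) ^+ (#|b| - #|y|) * (x == y)%:R))); last first.
  by move=> x /andP[_ xy]; rewrite claim.
rewrite (bigD1 y) /= ?ay ?subxx // big1 ?addr0 ?eqxx ?mulr1 //.
by move=> x /andP[_ /negbTE ->]; rewrite /= !mulr0.
Qed.

Theorem proposition6p8 (n : nat) :
  (exists J : {set 'I_n} -> {set 'I_n} -> {set 'I_n} -> int, J_spec J) /\
  (forall J : {set 'I_n} -> {set 'I_n} -> {set 'I_n} -> int, J_spec J ->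
     Mpoly J = ('X + 1) ^+ n * ('X - 1) ^+ (2 * n)).
Proof.
split; first by exists (@J0 n); exact: J0_spec.
move=> J HJ.
have cn : forall A : {set 'I_n}, (#|A| <= n)%N.
  by move=> A; have := max_card A; rewrite card_ord.
have GT : forall (a : {set 'I_n}) (u v : {poly int}),
    \sum_(x : {set 'I_n} | a \subset x) u ^+ (n - #|x|) * v ^+ (#|x| - #|a|) = (u + v) ^+ (n - #|a|).
  move=> a u v; have := GI u v (subsetT a); rewrite cardsT card_ord => <-.
  by apply: eq_bigl => x; rewrite subsetT andbT.
rewrite /Mpoly.
under eq_bigr do rewrite -sum_filter2.
pose t : {poly int} := 'X.
transitivity (\sum_(x : {set 'I_n}) (t * (t * (t - 1) - 1)) ^+ (n - #|x|) * 1 ^+ (#|x| - #|set0 : {set 'I_n}|)).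
  apply: eq_bigr => x _; rewrite expr1n mulr1.
  transitivity (\sum_(y : {set 'I_n} | x \subset y)
      t ^+ (n - #|x|) * ((t * (t - 1)) ^+ (n - #|y|) * (-1) ^+ (#|y| - #|x|))).
    apply: eq_bigr => y xy.
    transitivity (\sum_(z : {set 'I_n} | y \subset z)
      ((-1) ^+ (#|y| - #|x|) * t ^+ (n - #|x|) * t ^+ (n - #|y|)) * (t ^+ (n - #|z|) * (-1) ^+ (#|z| - #|y|))).
      apply: eq_bigr => z yz.
      rewrite J_uniq // /J0 /rho rmorphM /= !rmorphXn /= rmorphN /= rmorph1.
      have -> : (3 * n - #|x| - #|y| - #|z| = (n - #|x|) + (n - #|y|) + (n - #|z|))%N.
        by have := cn x; have := cn y; have := cn z; lia.
      rewrite !exprD /t; ring.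
    by rewrite -big_distrr /= GT exprMn /t; ring.
  by rewrite -big_distrr /= GT exprMn.
rewrite (eq_bigl (fun x : {set 'I_n} => set0 \subset x)); last by move=> x; rewrite sub0set.
rewrite GT cards0 subn0 exprM -exprMn /t; congr (_ ^+ _); ring.
Qed.
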